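(* Let $(M,d)$ and $(N,\rho)$ be complete pointed metric spaces, $(f_n)_n\subset\mathrm{Lip}_0(M,N)$ and $g\in\mathrm{Lip}_0(M,N)$ such that $(\widehat{f_n})_n$ converges to $\widehat g$ in the weak operator topology of $\mathcal L(\mathcal F(M),\mathcal F(N))$. Then $(\widehat{f_n})_n$ converges to $\widehat g$ in the strong operator topology.
   Context: A pointed metric space is a metric space with a distinguished point $0$. $\mathrm{Lip}_0(M,N)$ denotes the Lipschitz maps $f:M\to N$ with $f(0_M)=0_N$; $\mathrm{Lip}_0(M)=\mathrm{Lip}_0(M,\mathbb R)$ normed by the Lipschitz constant. $\delta_M:M\to\mathrm{Lip}_0(M)^*$, $\delta_M(x)(\varphi)=\varphi(x)$; $\mathcal F(M)$ is the norm-closed linear span of $\delta_M(M)$. For $f\in\mathrm{Lip}_0(M,N)$, $\widehat f:\mathcal F(M)\to\mathcal F(N)$ is the unique bounded linear operator with $\widehat f(\delta_M(x))=\delta_N(f(x))$. Operators $T_n\to T$ in the strong operator topology if $T_n\mu\to T\mu$ in norm for every $\mu$, and in the weak operator topology if $\langle y^*,T_n\mu\rangle\to\langle y^*,T\mu\rangle$ for all $\mu$ and all functionals $y^*$ on the target space. *)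

(* Defs.v *)
From Stdlib Require Import Reals List.
Open Scope R_scope.

Definition is_metric {M : Type} (d : M -> M -> R) : Prop :=
  (forall x y, 0 <= d x y) /\ (forall x y, d x y = 0 <-> x = y) /\
  (forall x y, d x y = d y x) /\ (forall x y z, d x z <= d x y + d y z).

Definition complete {M : Type} (d : M -> M -> R) : Prop :=
  forall u : nat -> M,
    (forall e, e > 0 -> exists K, forall m n, (m >= K)%nat -> (n >= K)%nat -> d (u m) (u n) < e) ->
    exists l, forall e, e > 0 -> exists K, forall n, (n >= K)%nat -> d (u n) l < e.

Definition lipschitz_with {M N : Type} (dM : M -> M -> R) (dN : N -> N -> R)
  (L : R) (f : M -> N) : Prop :=
  forall x y, dN (f x) (f y) <= L * dM x y.

Definition lip0map {M N : Type} (dM : M -> M -> R) (x0 : M) (dN : N -> N -> R) (y0 : N)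
  (f : M -> N) : Prop :=
  (exists L, lipschitz_with dM dN L f) /\ f x0 = y0.

Definition lip0 {M : Type} (dM : M -> M -> R) (x0 : M) (phi : M -> R) : Prop :=
  lip0map dM x0 R_dist 0 phi.

(* candidate elements of Lip_0(M)^* : functions on real-valued maps;
   only their values on Lip_0(M) matter *)
Definition functional (M : Type) := (M -> R) -> R.

Definition dnorm_le {M : Type} (dM : M -> M -> R) (x0 : M) (mu : functional M) (c : R) : Prop :=
  forall phi, lip0 dM x0 phi -> lipschitz_with dM R_dist 1 phi -> Rabs (mu phi) <= c.

Definition dual_elem {M : Type} (dM : M -> M -> R) (x0 : M) (mu : functional M) : Prop :=
  (forall a b phi psi, lip0 dM x0 phi -> lip0 dM x0 psi ->
     mu (fun x => a * phi x + b * psi x) = a * mu phi + b * mu psi) /\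
  exists C, dnorm_le dM x0 mu C.

Definition delta {M : Type} (x : M) : functional M := fun phi => phi x.

Definition mol {M : Type} (l : list (R * M)) : functional M :=
  fun phi => fold_right (fun p acc => fst p * phi (snd p) + acc) 0 l.

(* mu in F(M): the norm closure of span delta(M) inside Lip_0(M)^* *)
Definition in_free {M : Type} (dM : M -> M -> R) (x0 : M) (mu : functional M) : Prop :=
  dual_elem dM x0 mu /\
  forall e, e > 0 -> exists l, dnorm_le dM x0 (fun phi => mu phi - mol l phi) e.

Definition lincomb {M : Type} (a : R) (mu : functional M) (b : R) (nu : functional M) : functional M :=
  fun phi => a * mu phi + b * nu phi.

(* T is the linearization \hat f : F(M) -> F(N): a bounded linear operator
   F(M) -> F(N) with T (delta x) = delta (f x) (equalities in F(N), i.e. on Lip_0(N)) *)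
Definition is_linearization {M N : Type} (dM : M -> M -> R) (x0 : M)
  (dN : N -> N -> R) (y0 : N) (f : M -> N) (T : functional M -> functional N) : Prop :=
  (forall mu, in_free dM x0 mu -> in_free dN y0 (T mu)) /\
  (forall a b mu nu, in_free dM x0 mu -> in_free dM x0 nu ->
     forall phi, lip0 dN y0 phi ->
       T (lincomb a mu b nu) phi = a * T mu phi + b * T nu phi) /\
  (exists C, forall mu c, in_free dM x0 mu -> dnorm_le dM x0 mu c ->
       dnorm_le dN y0 (T mu) (C * c)) /\
  (forall x phi, lip0 dN y0 phi -> T (delta x) phi = phi (f x)).

Definition free_dual_elem {N : Type} (dN : N -> N -> R) (y0 : N) (y : functional N -> R) : Prop :=
  (forall a b mu nu, in_free dN y0 mu -> in_free dN y0 nu ->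
     y (lincomb a mu b nu) = a * y mu + b * y nu) /\
  exists C, forall mu c, in_free dN y0 mu -> dnorm_le dN y0 mu c -> Rabs (y mu) <= C * c.

Definition wot_conv {M N : Type} (dM : M -> M -> R) (x0 : M) (dN : N -> N -> R) (y0 : N)
  (T : nat -> functional M -> functional N) (S : functional M -> functional N) : Prop :=
  forall mu, in_free dM x0 mu -> forall y, free_dual_elem dN y0 y ->
    Un_cv (fun n => y (T n mu)) (y (S mu)).

Definition sot_conv {M N : Type} (dM : M -> M -> R) (x0 : M) (dN : N -> N -> R) (y0 : N)
  (T : nat -> functional M -> functional N) (S : functional M -> functional N) : Prop :=
  forall mu, in_free dM x0 mu -> forall e, e > 0 -> exists K, forall n, (n >= K)%nat ->
    dnorm_le dN y0 (fun phi => T n mu phi - S mu phi) e.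

(* Main.v *)
Require Import Defs.
From Stdlib Require Import Reals List Lra Lia Arith ZArith ClassicalEpsilon Classical FunctionalExtensionality.
From Coquelicot Require Import Coquelicot.
Open Scope R_scope.

Lemma small_zero (x K : R) : (forall e, e > 0 -> Rabs x <= e * K) -> x = 0.
Proof.
  intros H. destruct (Req_dec x 0) as [|Hx]; auto.
  assert (Ha : Rabs x > 0) by (apply Rabs_pos_lt; auto).
  set (K' := Rabs K + 1).
  assert (HK' : K' > 0) by (unfold K'; pose proof (Rabs_pos K); lra).
  specialize (H (Rabs x / (2 * K'))).
  assert (Hp : Rabs x / (2*K') > 0) by (apply Rdiv_lt_0_compat; lra).
  specialize (H Hp).
  assert (Rabs x / (2*K') * K <= Rabs x / (2*K') * K').
  { apply Rmult_le_compat_l; [lra|]. unfold K'. pose proof (Rle_abs K). lra. }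
  assert (Rabs x / (2*K') * K' = Rabs x / 2) by (field; lra).
  lra.
Qed.

Lemma Rabs_div_pos a b : b > 0 -> Rabs (a / b) = Rabs a / b.
Proof. intros. unfold Rdiv. rewrite Rabs_mult, Rabs_inv, (Rabs_right b); lra. Qed.

Section Gen.
Variables (X : Type) (dX : X -> X -> R) (z0 : X) (hX : is_metric dX).

Lemma d_nonneg x y : 0 <= dX x y.
Proof. destruct hX as [H _]; apply H. Qed.
Lemma d_refl x : dX x x = 0.
Proof. destruct hX as [_ [H _]]; apply H; auto. Qed.
Lemma d_sym x y : dX x y = dX y x.
Proof. destruct hX as [_ [_ [H _]]]; apply H. Qed.
Lemma d_tri x y z : dX x z <= dX x y + dX y z.
Proof. destruct hX as [_ [_ [_ H]]]; apply H. Qed.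
Lemma d_zero x y : dX x y = 0 -> x = y.
Proof. destruct hX as [_ [H _]]; apply H. Qed.

Lemma lip_pos {Y} (dY : Y -> Y -> R) L (h : X -> Y) :
  lipschitz_with dX dY L h -> lipschitz_with dX dY (Rabs L + 1) h.
Proof.
  intros H x y. specialize (H x y). pose proof (d_nonneg x y).
  assert (L * dX x y <= (Rabs L + 1) * dX x y).
  { apply Rmult_le_compat_r; auto. pose proof (Rle_abs L); lra. }
  lra.
Qed.

Lemma dual_bound (nu : functional X) c chi L :
  dual_elem dX z0 nu -> dnorm_le dX z0 nu c -> lip0 dX z0 chi ->
  lipschitz_with dX R_dist L chi -> L > 0 -> Rabs (nu chi) <= c * L.
Proof.
  intros [Hlin _] Hn Hchi Hl HL.
  set (psi := fun x => chi x / L).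
  assert (Hp : lip0 dX z0 psi).
  { split.
    - exists 1. intros x y. unfold psi, R_dist.
      replace (chi x / L - chi y / L) with ((chi x - chi y) / L) by (field; lra).
      rewrite Rabs_div_pos by lra.
      apply Rmult_le_reg_r with L; auto. field_simplify; try lra.
      specialize (Hl x y). unfold R_dist in Hl. lra.
    - unfold psi. destruct Hchi as [_ H0]. rewrite H0. field; lra. }
  assert (Hp1 : lipschitz_with dX R_dist 1 psi).
  { intros x y. unfold psi, R_dist.
      replace (chi x / L - chi y / L) with ((chi x - chi y) / L) by (field; lra).
      rewrite Rabs_div_pos by lra.
      apply Rmult_le_reg_r with L; auto. field_simplify; try lra.
      specialize (Hl x y). unfold R_dist in Hl. lra. }
  specialize (Hn psi Hp Hp1).
  assert (E : chi = fun x => L * psi x + 0 * psi x).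
  { apply functional_extensionality; intros x; unfold psi; field; lra. }
  rewrite E, Hlin by auto.
  replace (L * nu psi + 0 * nu psi) with (L * nu psi) by ring.
  rewrite Rabs_mult, (Rabs_right L) by lra.
  rewrite Rmult_comm. apply Rmult_le_compat_r; lra.
Qed.

Lemma mol_cons p l : mol (p :: l) = lincomb (fst p) (delta (snd p)) 1 (@mol X l).
Proof. apply functional_extensionality; intros phi. unfold mol, lincomb, delta; simpl. ring. Qed.

Fixpoint mnorm (l : list (R * X)) : R :=
  match l with nil => 0 | p :: l => Rabs (fst p) * dX (snd p) z0 + mnorm l end.

Lemma mol_lin l a b phi psi : lip0 dX z0 phi -> lip0 dX z0 psi ->
  mol l (fun x => a * phi x + b * psi x) = a * mol l phi + b * mol l psi.
Proof.
  intros _ _. induction l as [|p l IH]; simpl; [ring|]. rewrite IH. ring.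
Qed.

Lemma mol_bound l phi : lip0 dX z0 phi -> lipschitz_with dX R_dist 1 phi ->
  Rabs (mol l phi) <= mnorm l.
Proof.
  intros [_ H0] H1. induction l as [|p l IH]; simpl.
  - rewrite Rabs_R0; lra.
  - eapply Rle_trans; [apply Rabs_triang|]. rewrite Rabs_mult.
    assert (Rabs (phi (snd p)) <= dX (snd p) z0).
    { specialize (H1 (snd p) z0). unfold R_dist in H1. rewrite H0, Rminus_0_r in H1. lra. }
    pose proof (Rabs_pos (fst p)).
    pose proof (Rmult_le_compat_l _ _ _ H2 H). lra.
Qed.

Lemma mol_in_free l : in_free dX z0 (mol l).
Proof.
  split.
  - split.
    + intros; apply mol_lin; auto.
    + exists (mnorm l). intros phi Hp H1. apply mol_bound; auto.
  - intros e He. exists l. intros phi Hp H1. replace (mol l phi - mol l phi) with 0 by ring.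
    rewrite Rabs_R0; lra.
Qed.

Lemma delta_mol x : delta x = @mol X ((1, x) :: nil).
Proof. apply functional_extensionality; intros phi; unfold mol, delta; simpl; ring. Qed.

Lemma delta_in_free x : in_free dX z0 (delta x).
Proof. rewrite delta_mol. apply mol_in_free. Qed.

Lemma mol_app l1 l2 phi : mol (l1 ++ l2) phi = mol l1 phi + @mol X l2 phi.
Proof. induction l1 as [|p l IH]; simpl; [ring|]. rewrite IH; ring. Qed.

Lemma mol_scale a l phi : mol (map (fun p => (a * fst p, snd p)) l) phi = a * @mol X l phi.
Proof. induction l as [|p l IH]; simpl; [ring|]. rewrite IH; ring. Qed.

Lemma in_free_lincomb a mu b nu : in_free dX z0 mu -> in_free dX z0 nu ->
  in_free dX z0 (lincomb a mu b nu).
Proof.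
  intros [[Lm [Cm Bm]] Am] [[Ln [Cn Bn]] An]. split; [split|].
  - intros a' b' phi psi Hp Hq. unfold lincomb. rewrite Lm, Ln by auto. ring.
  - exists (Rabs a * Cm + Rabs b * Cn). intros phi Hp H1. unfold lincomb.
    eapply Rle_trans; [apply Rabs_triang|]. rewrite !Rabs_mult.
    specialize (Bm phi Hp H1). specialize (Bn phi Hp H1).
    pose proof (Rabs_pos a). pose proof (Rabs_pos b).
    pose proof (Rmult_le_compat_l _ _ _ H Bm). pose proof (Rmult_le_compat_l _ _ _ H0 Bn). lra.
  - intros e He.
    set (e' := e / (2 * (Rabs a + Rabs b + 1))).
    assert (He' : e' > 0) by (unfold e'; apply Rdiv_lt_0_compat; [lra|];
      pose proof (Rabs_pos a); pose proof (Rabs_pos b); lra).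
    destruct (Am e' He') as [l1 H1]. destruct (An e' He') as [l2 H2].
    exists (map (fun p => (a * fst p, snd p)) l1 ++ map (fun p => (b * fst p, snd p)) l2).
    intros phi Hp Hq. rewrite mol_app, !mol_scale. unfold lincomb.
    specialize (H1 phi Hp Hq). specialize (H2 phi Hp Hq).
    replace (a * mu phi + b * nu phi - (a * mol l1 phi + b * mol l2 phi))
      with (a * (mu phi - mol l1 phi) + b * (nu phi - mol l2 phi)) by ring.
    eapply Rle_trans; [apply Rabs_triang|]. rewrite !Rabs_mult.
    pose proof (Rabs_pos a). pose proof (Rabs_pos b).
    pose proof (Rmult_le_compat_l _ _ _ H H1). pose proof (Rmult_le_compat_l _ _ _ H0 H2).
    assert ((Rabs a + Rabs b) * e' <= e).
    { assert ((Rabs a + Rabs b + 1) * e' = e / 2) by (unfold e'; field; lra).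
      assert ((Rabs a + Rabs b) * e' <= (Rabs a + Rabs b + 1) * e')
        by (apply Rmult_le_compat_r; lra). lra. }
    lra.
Qed.

Lemma in_free_diff mu nu : in_free dX z0 mu -> in_free dX z0 nu ->
  in_free dX z0 (fun phi => mu phi - nu phi).
Proof.
  intros. replace (fun phi => mu phi - nu phi) with (lincomb 1 mu (-1) nu).
  - apply in_free_lincomb; auto.
  - apply functional_extensionality; intros; unfold lincomb; ring.
Qed.

End Gen.

Section Lin.
Variables (M N : Type) (d : M -> M -> R) (rho : N -> N -> R) (x0 : M) (y0 : N)
  (hM : is_metric d) (hN : is_metric rho) (f : M -> N) (T : functional M -> functional N)
  (hf : lip0map d x0 rho y0 f) (hT : is_linearization d x0 rho y0 f T).

Lemma comp_lip0 phi : lip0 rho y0 phi -> lip0 d x0 (fun x => phi (f x)).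
Proof.
  intros [[L HL] H0]. destruct hf as [[Lf Hf] Hf0]. split.
  - exists ((Rabs L + 1) * (Rabs Lf + 1)). intros x y.
    pose proof (lip_pos _ _ hN _ _ _ HL (f x) (f y)).
    pose proof (lip_pos _ _ hM _ _ _ Hf x y).
    eapply Rle_trans; [apply H|]. rewrite Rmult_assoc.
    apply Rmult_le_compat_l; auto. pose proof (Rabs_pos L); lra.
  - simpl. rewrite Hf0. auto.
Qed.

Lemma comp_lip phi L Lf : lipschitz_with rho R_dist L phi -> lipschitz_with d rho Lf f ->
  0 <= L -> lipschitz_with d R_dist (L * Lf) (fun x => phi (f x)).
Proof.
  intros HL Hf HL0 x y. eapply Rle_trans; [apply HL|]. rewrite Rmult_assoc.
  apply Rmult_le_compat_l; auto.
Qed.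

Lemma T_mol l phi : lip0 rho y0 phi -> T (mol l) phi = mol l (fun x => phi (f x)).
Proof.
  intros Hp. destruct hT as [Tin [Tlin [_ Tdel]]].
  induction l as [|p l IH].
  - assert (E : @mol M nil = lincomb 0 (delta x0) 0 (delta x0))
      by (apply functional_extensionality; intros; unfold lincomb, mol, delta; simpl; ring).
    rewrite E at 1. rewrite Tlin by (auto; apply delta_in_free; auto). unfold mol; simpl. ring.
  - rewrite mol_cons. rewrite Tlin; auto.
    + rewrite IH, Tdel by auto. unfold lincomb, delta, mol; simpl. ring.
    + apply delta_in_free; auto.
    + apply mol_in_free; auto.
Qed.

Lemma T_formula mu phi : in_free d x0 mu -> lip0 rho y0 phi -> T mu phi = mu (fun x => phi (f x)).
Proof.
  intros Hmu Hp.
  destruct hT as [Tin [Tlin [[C TC] Tdel]]].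
  pose proof Hp as [[Lp HLp] Hp0].
  pose proof hf as [[Lf HLf] Hf0].
  apply (lip_pos _ _ hN) in HLp. apply (lip_pos _ _ hM) in HLf.
  set (L1 := Rabs Lp + 1) in *. set (L2 := Rabs Lf + 1) in *.
  assert (HL1 : L1 > 0) by (unfold L1; pose proof (Rabs_pos Lp); lra).
  assert (HL2 : L2 > 0) by (unfold L2; pose proof (Rabs_pos Lf); lra).
  apply Rminus_diag_uniq. apply (small_zero _ (C * L1 + L1 * L2)).
  intros e He.
  destruct Hmu as [Hmud Hmua]. destruct (Hmua e He) as [l Hl].
  set (nu := fun phi => mu phi - mol l phi).
  assert (Hnu : in_free d x0 nu) by (apply in_free_diff; auto; [split; auto | apply mol_in_free; auto]).
  assert (E : nu = lincomb 1 mu (-1) (mol l))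
    by (apply functional_extensionality; intros; unfold nu, lincomb; ring).
  assert (HT1 : T nu phi = T mu phi - T (mol l) phi).
  { rewrite E, Tlin; auto; [ring | split; auto | apply mol_in_free; auto]. }
  assert (B1 : Rabs (T nu phi) <= C * e * L1).
  { apply (dual_bound _ rho y0); [apply Tin; auto | apply TC; auto | auto | auto | auto]. }
  assert (B2 : Rabs (nu (fun x => phi (f x))) <= e * (L1 * L2)).
  { apply (dual_bound _ d x0); auto.
    - apply Hnu.
    - apply comp_lip0; auto.
    - apply comp_lip; auto; lra.
    - apply Rmult_lt_0_compat; auto. }
  rewrite T_mol in HT1 by auto. unfold nu in B2.
  replace (T mu phi - mu (fun x => phi (f x))) with
    (T nu phi - (mu (fun x => phi (f x)) - mol l (fun x => phi (f x)))) by (rewrite HT1; ring).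
  eapply Rle_trans; [apply Rabs_triang|]. rewrite Rabs_Ropp. lra.
Qed.

Lemma lip_free_dual phi : lip0 rho y0 phi -> free_dual_elem rho y0 (fun nu => nu phi).
Proof.
  intros Hp. split.
  - intros. unfold lincomb. auto.
  - pose proof Hp as [[Lp HLp] _]. apply (lip_pos _ _ hN) in HLp.
    exists (Rabs Lp + 1). intros mu c Hmu Hc.
    rewrite Rmult_comm. apply (dual_bound _ rho y0); auto. apply Hmu.
    pose proof (Rabs_pos Lp); lra.
Qed.

End Lin.

Fixpoint fsum (m : nat) (u : nat -> R) : R :=
  match m with O => 0 | S m => fsum m u + u m end.

Lemma fsum_S m u : fsum (S m) u = fsum m u + u m.
Proof. reflexivity. Qed.
Lemma fsum_ext m u v : (forall j, (j < m)%nat -> u j = v j) -> fsum m u = fsum m v.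
Proof. induction m; simpl; intros H; auto. rewrite IHm by (intros; apply H; lia). rewrite (H m) by lia. auto. Qed.
Lemma fsum_plus m u v : fsum m (fun j => u j + v j) = fsum m u + fsum m v.
Proof. induction m; simpl; [ring|]. rewrite IHm; ring. Qed.
Lemma fsum_scal m a u : fsum m (fun j => a * u j) = a * fsum m u.
Proof. induction m; simpl; [ring|]. rewrite IHm; ring. Qed.
Lemma fsum_minus m u v : fsum m (fun j => u j - v j) = fsum m u - fsum m v.
Proof. induction m; simpl; [ring|]. rewrite IHm; ring. Qed.
Lemma fsum_abs m u : Rabs (fsum m u) <= fsum m (fun j => Rabs (u j)).
Proof. induction m; simpl. rewrite Rabs_R0; lra. eapply Rle_trans; [apply Rabs_triang|]. lra. Qed.
Lemma fsum_le m u v : (forall j, (j < m)%nat -> u j <= v j) -> fsum m u <= fsum m v.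
Proof. induction m; simpl; intros H; [lra|]. pose proof (H m ltac:(lia)). pose proof (IHm ltac:(intros; apply H; lia)). lra. Qed.

Fixpoint cc (k : nat) : R := match k with O => / 2 | S k => cc k * cc k / 16 end.

Lemma cc_pos k : 0 < cc k /\ cc k <= / 2.
Proof.
  induction k; simpl; [lra|]. destruct IHk as [H1 H2]. split.
  - apply Rdiv_lt_0_compat; [apply Rmult_lt_0_compat|]; lra.
  - assert (cc k * cc k <= cc k * (/2)) by (apply Rmult_le_compat_l; lra). lra.
Qed.
Lemma cc_S k : cc (S k) <= cc k / 2.
Proof.
  simpl. destruct (cc_pos k) as [H1 H2].
  assert (cc k * cc k <= cc k * (/2)) by (apply Rmult_le_compat_l; lra). lra.
Qed.
Lemma cc_geom m i : cc (m + i) <= cc m * (/2)^i.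
Proof.
  induction i.
  - rewrite Nat.add_0_r. simpl. lra.
  - replace (m + S i)%nat with (S (m + i)) by lia. simpl.
    pose proof (cc_S (m + i)). simpl in H. lra.
Qed.
Lemma fsum_cc m : fsum m cc + 2 * cc m <= 1.
Proof.
  induction m; simpl; [lra|]. pose proof (cc_S m). simpl in H. lra.
Qed.

Lemma geom_ser a K : (forall i, Rabs (a i) <= K * (/2)^i) -> ex_series a /\ Rabs (Series a) <= 2 * K.
Proof.
  intros H.
  assert (Hg : ex_series (fun i => K * (/2)^i)).
  { apply (ex_series_ext (fun i => scal K ((/2)^i))); [intros; reflexivity|].
    apply (@ex_series_scal_l R_AbsRing R_NormedModule). apply ex_series_geom. rewrite Rabs_right; lra. }
  assert (Ha : ex_series (fun i => Rabs (a i))).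
  { apply (@ex_series_le R_AbsRing R_CompleteNormedModule _ (fun i => K * (/2)^i)); [|exact Hg]. intros n. change (Rabs (Rabs (a n)) <= K * (/2)^n).
    rewrite Rabs_Rabsolu. apply H. }
  split; [apply ex_series_Rabs; auto|].
  eapply Rle_trans; [apply Series_Rabs; auto|].
  eapply Rle_trans; [apply Series_le; [|exact Hg]|].
  - intros n; split; [apply Rabs_pos| apply H].
  - rewrite Series_scal_l, Series_geom by (rewrite Rabs_right; lra). lra.
Qed.

Lemma wser v V m : (forall j, Rabs (v j) <= V) ->
  ex_series (fun j => cc j * v j) /\
  Series (fun j => cc j * v j) = fsum m (fun j => cc j * v j) + Series (fun i => cc (m + i)%nat * v (m + i)%nat) /\
  Rabs (Series (fun i => cc (m + i)%nat * v (m + i)%nat)) <= 2 * cc m * V.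
Proof.
  intros H. assert (HV : 0 <= V) by (pose proof (H O); pose proof (Rabs_pos (v O)); lra).
  assert (G : forall m : nat, ex_series (fun i => cc (m + i)%nat * v (m + i)%nat) /\
      Rabs (Series (fun i => cc (m + i)%nat * v (m + i)%nat)) <= 2 * (cc m * V)).
  { intros m0. apply geom_ser. intros i. rewrite Rabs_mult.
    rewrite (Rabs_right (cc (m0 + i)%nat)) by (pose proof (cc_pos (m0+i)); lra).
    pose proof (cc_geom m0 i). pose proof (cc_pos (m0 + i)%nat).
    assert (cc (m0 + i)%nat * Rabs (v (m0 + i)%nat) <= cc (m0 + i)%nat * V) by (apply Rmult_le_compat_l; [lra|apply H]).
    assert (cc (m0 + i)%nat * V <= cc m0 * (/ 2) ^ i * V) by (apply Rmult_le_compat_r; lra).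
    lra. }
  assert (E0 : ex_series (fun j => cc j * v j)) by (destruct (G O) as [G0 _]; simpl in G0; exact G0).
  split; auto. split; [|destruct (G m); lra].
  induction m.
  - simpl. rewrite Rplus_0_l. apply Series_ext. intros; reflexivity.
  - rewrite IHm. simpl fsum. destruct (G m) as [Gm _].
    rewrite (Series_incr_1 _ Gm). rewrite Nat.add_0_r.
    assert (Series (fun k => cc (m + S k)%nat * v (m + S k)%nat) = Series (fun i => cc (S m + i)%nat * v (S m + i)%nat)).
    { apply Series_ext. intros; replace (m + S n)%nat with (S m + n)%nat by lia. reflexivity. }
    rewrite H0. ring.
Qed.

Lemma nat_above (B : R) : exists k : nat, B < INR k.
Proof.
  destruct (archimed B) as [H1 _].
  destruct (Z_le_gt_dec (up B) 0) as [h|h].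
  - exists O. simpl. apply IZR_le in h. lra.
  - exists (Z.to_nat (up B)). rewrite INR_IZR_INZ, Z2Nat.id by lia. lra.
Qed.

Lemma div_le a b c : b > 0 -> a <= c * b -> a / b <= c.
Proof. intros Hb H. apply Rmult_le_reg_r with b; auto. replace (a / b * b) with a by (field; lra). lra. Qed.
Lemma div_lt a b c : b > 0 -> c * b < a -> c < a / b.
Proof. intros Hb H. apply Rmult_lt_reg_r with b; auto. replace (a / b * b) with a by (field; lra). lra. Qed.
Lemma le_div a b c : b > 0 -> c <= a / b -> c * b <= a.
Proof. intros Hb H. replace a with (a / b * b) by (field; lra). apply Rmult_le_compat_r; lra. Qed.

Lemma div_le_inv a b c : b > 0 -> a / b <= c -> a <= c * b.
Proof. intros Hb H. replace a with (a / b * b) by (field; lra). apply Rmult_le_compat_r; lra. Qed.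

Lemma fin_bound (u : nat -> R) K : exists B, forall n, (n < K)%nat -> u n <= B.
Proof.
  induction K.
  - exists 0. intros; lia.
  - destruct IHK as [B HB]. exists (Rmax B (u K)). intros n Hn.
    destruct (Nat.eq_dec n K) as [->|Hne]; [apply Rmax_r|].
    eapply Rle_trans; [apply HB; lia| apply Rmax_l].
Qed.

Lemma cv_bounded u l : Un_cv u l -> exists B, forall n, Rabs (u n) <= B.
Proof.
  intros H. destruct (H 1 ltac:(lra)) as [K HK].
  destruct (fin_bound (fun n => Rabs (u n)) K) as [B HB].
  exists (Rmax B (Rabs l + 1)). intros n. destruct (le_lt_dec K n) as [h|h].
  - specialize (HK n h). unfold R_dist in HK.
    eapply Rle_trans; [|apply Rmax_r].
    replace (u n) with ((u n - l) + l) by ring. eapply Rle_trans; [apply Rabs_triang|]. lra.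
  - eapply Rle_trans; [apply HB; auto| apply Rmax_l].
Qed.

Lemma pp_lip {X} (dX : X -> X -> R) (hX : is_metric dX) z0 p z z' :
  Rabs ((dX z p - dX z0 p) - (dX z' p - dX z0 p)) <= dX z z'.
Proof.
  replace ((dX z p - dX z0 p) - (dX z' p - dX z0 p)) with (dX z p - dX z' p) by ring.
  pose proof (d_tri _ _ hX z z' p). pose proof (d_tri _ _ hX z' z p).
  rewrite (d_sym _ _ hX z' z) in H0. apply Rabs_le; lra.
Qed.

Lemma pp_lip0 {X} (dX : X -> X -> R) (hX : is_metric dX) z0 p :
  lip0 dX z0 (fun z => dX z p - dX z0 p) /\ lipschitz_with dX R_dist 1 (fun z => dX z p - dX z0 p).
Proof.
  assert (H1 : lipschitz_with dX R_dist 1 (fun z => dX z p - dX z0 p)).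
  { intros z z'. unfold R_dist. rewrite Rmult_1_l. apply pp_lip; auto. }
  split; auto. split; [exists 1; auto| ring].
Qed.

Section Main.
Variables (M N : Type) (d : M -> M -> R) (rho : N -> N -> R) (x0 : M) (y0 : N)
  (hM : is_metric d) (hN : is_metric rho)
  (f : nat -> M -> N) (g : M -> N)
  (hf : forall n, lip0map d x0 rho y0 (f n)) (hg : lip0map d x0 rho y0 g)
  (Tf : nat -> functional M -> functional N) (Tg : functional M -> functional N)
  (hTf : forall n, is_linearization d x0 rho y0 (f n) (Tf n))
  (hTg : is_linearization d x0 rho y0 g Tg)
  (hwot : wot_conv d x0 rho y0 Tf Tg).

Lemma pw_conv x : Un_cv (fun n => rho (f n x) (g x)) 0.
Proof.
  destruct (pp_lip0 _ hN y0 (g x)) as [Hl _].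
  pose proof (hwot (delta x) (delta_in_free _ _ _ _) _ (lip_free_dual _ _ _ hN _ Hl)) as H.
  intros eps He. destruct (H eps He) as [K HK]. exists K. intros n Hn. specialize (HK n Hn).
  destruct (hTf n) as [_ [_ [_ D1]]]. destruct hTg as [_ [_ [_ D2]]].
  rewrite D1, D2 in HK by auto. unfold R_dist in *. rewrite (d_refl _ _ hN) in HK.
  replace (rho (f n x) (g x) - rho y0 (g x) - (0 - rho y0 (g x))) with (rho (f n x) (g x) - 0) in HK by ring.
  auto.
Qed.

Lemma pw_bound x : exists B, forall n, rho (f n x) y0 <= B.
Proof.
  destruct (cv_bounded _ _ (pw_conv x)) as [B HB]. exists (B + rho (g x) y0). intros n.
  pose proof (d_tri _ _ hN (f n x) (g x) y0). pose proof (HB n). pose proof (Rle_abs (rho (f n x) (g x))). lra.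
Qed.

Definition ratio n a b := rho (f n a) (f n b) / d a b.

Lemma choose_big (U : forall L, exists n, ~ lipschitz_with d rho L (f n)) Lam :
  exists n a b, d a b > 0 /\ Lam <= ratio n a b /\ lipschitz_with d rho (2 * ratio n a b) (f n).
Proof.
  set (Lam' := Rmax Lam 1).
  destruct (U Lam') as [n Hn].
  apply not_all_ex_not in Hn. destruct Hn as [x Hx]. apply not_all_ex_not in Hx. destruct Hx as [y Hxy].
  apply Rnot_le_lt in Hxy.
  assert (HL1 : 1 <= Lam') by apply Rmax_r.
  assert (Hd : d x y > 0).
  { destruct (Rle_lt_or_eq_dec _ _ (d_nonneg _ _ hM x y)) as [h|h]; [lra|].
    symmetry in h. apply (d_zero _ _ hM) in h. subst y. rewrite (d_refl _ _ hN) in Hxy.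
    rewrite (d_refl _ _ hM) in Hxy. lra. }
  set (E := fun r => exists a b, d a b > 0 /\ r = ratio n a b).
  assert (Hb : bound E).
  { destruct (hf n) as [[Lf HLf] _]. exists Lf. intros r [a [b [Hab ->]]].
    unfold ratio. apply div_le; auto. }
  assert (He : exists r, E r) by (exists (ratio n x y); exists x, y; auto).
  destruct (completeness E Hb He) as [m [Hm1 Hm2]].
  assert (Hr0 : Lam' < ratio n x y) by (unfold ratio; apply div_lt; auto).
  assert (Hm : ratio n x y <= m) by (apply Hm1; exists x, y; auto).
  set (t := Rmax (m / 2) Lam').
  assert (Ht : t < m) by (unfold t; apply Rmax_lub_lt; lra).
  destruct (classic (exists r, E r /\ r > t)) as [[r [[a [b [Hab ->]]] Hr]]|Hno].
  - exists n, a, b. split; auto.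
    assert (m / 2 <= t) by apply Rmax_l. assert (Lam' <= t) by apply Rmax_r.
    assert (Lam <= Lam') by apply Rmax_l.
    split; [lra|].
    intros u v. destruct (Rle_lt_or_eq_dec _ _ (d_nonneg _ _ hM u v)) as [h|h].
    + assert (ratio n u v <= m) by (apply Hm1; exists u, v; auto).
      unfold ratio in H2. apply div_le_inv in H2; auto.
      assert (m * d u v <= 2 * ratio n a b * d u v) by (apply Rmult_le_compat_r; lra). lra.
    + symmetry in h. pose proof h as h'. apply (d_zero _ _ hM) in h. subst v.
      rewrite (d_refl _ _ hN), h'. lra.
  - exfalso. assert (is_upper_bound E t).
    { intros r Er. apply Rnot_lt_le. intro. apply Hno. exists r. split; auto. }
    specialize (Hm2 t H). lra.
Qed.


Record item : Type := mkI { i_n : nat; i_a : M; i_b : M; i_s : R }.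
Definition upd (h : nat -> item) k it := fun j => if Nat.eqb j k then it else h j.
Definition ww (it : item) (chi : M -> R) := (chi (i_a it) - chi (i_b it)) / d (i_a it) (i_b it).
Definition pp (it : item) (z : N) := rho z (f (i_n it) (i_b it)) - rho y0 (f (i_n it) (i_b it)).
Definition yfin h m z := fsum m (fun l => cc l * (i_s (h l) * pp (h l) z)).
Definition Ffin h m n := fsum m (fun j => cc j * ww (h j) (fun x => yfin h m (f n x))).
Definition Good h k it :=
  d (i_a it) (i_b it) > 0 /\ (i_s it = 1 \/ i_s it = -1) /\
  lipschitz_with d rho (2 * ratio (i_n it) (i_a it) (i_b it)) (f (i_n it)) /\
  0 < ratio (i_n it) (i_a it) (i_b it) /\
  cc k * cc k * ratio (i_n it) (i_a it) (i_b it) / 2 + INR k <= Rabs (Ffin (upd h k it) (S k) (i_n it)).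

Lemma ww_lin it u c v : ww it (fun x => u x + c * v x) = ww it u + c * ww it v.
Proof. unfold ww, Rdiv. ring. Qed.

Lemma ww_bound it u L : d (i_a it) (i_b it) > 0 -> Rabs (u (i_a it) - u (i_b it)) <= L * d (i_a it) (i_b it) ->
  Rabs (ww it u) <= L.
Proof. intros Hd H. unfold ww. rewrite Rabs_div_pos by auto. apply div_le; auto. Qed.

Lemma ww_bound' it u B : Rabs (u (i_a it) - u (i_b it)) <= B -> Rabs (ww it u) <= B * Rabs (/ d (i_a it) (i_b it)).
Proof. intros H. unfold ww, Rdiv. rewrite Rabs_mult. apply Rmult_le_compat_r; auto. apply Rabs_pos. Qed.

Lemma pp_lip' it z z' : Rabs (pp it z - pp it z') <= rho z z'.
Proof. unfold pp. apply pp_lip; auto. Qed.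

Lemma pp_y0 it : pp it y0 = 0.
Proof. unfold pp. ring. Qed.

Lemma Ffin_ext h h' m n : (forall j, (j < m)%nat -> h j = h' j) -> Ffin h m n = Ffin h' m n.
Proof.
  intros H. unfold Ffin. apply fsum_ext. intros j Hj. rewrite H by auto.
  assert (E : forall z, yfin h m z = yfin h' m z).
  { intros z. unfold yfin. apply fsum_ext. intros l Hl. rewrite H by auto. reflexivity. }
  f_equal. unfold ww. rewrite !E. reflexivity.
Qed.

Lemma sum_bound_ex (h : nat -> item) k : exists G, forall n,
  fsum k (fun j => cc j * ((rho (f n (i_a (h j))) y0 + rho (f n (i_b (h j))) y0) * Rabs (/ d (i_a (h j)) (i_b (h j))))) <= G.
Proof.
  induction k.
  - exists 0. intros; simpl; lra.
  - destruct IHk as [G HG]. destruct (pw_bound (i_a (h k))) as [Ba HBa].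
    destruct (pw_bound (i_b (h k))) as [Bb HBb].
    exists (G + cc k * ((Ba + Bb) * Rabs (/ d (i_a (h k)) (i_b (h k))))). intros n. simpl.
    pose proof (HG n). pose proof (cc_pos k).
    assert ((rho (f n (i_a (h k))) y0 + rho (f n (i_b (h k))) y0) * Rabs (/ d (i_a (h k)) (i_b (h k)))
       <= (Ba + Bb) * Rabs (/ d (i_a (h k)) (i_b (h k)))).
    { apply Rmult_le_compat_r; [apply Rabs_pos|]. pose proof (HBa n); pose proof (HBb n); lra. }
    assert (cc k * ((rho (f n (i_a (h k))) y0 + rho (f n (i_b (h k))) y0) * Rabs (/ d (i_a (h k)) (i_b (h k))))
       <= cc k * ((Ba + Bb) * Rabs (/ d (i_a (h k)) (i_b (h k))))) by (apply Rmult_le_compat_l; lra).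
    lra.
Qed.

Lemma Ffin_split h k n a b s :
  Ffin (upd h k (mkI n a b s)) (S k) n =
  fsum (S k) (fun j => cc j * ww (upd h k (mkI n a b 1) j) (fun x => yfin h k (f n x))) +
  s * cc k * fsum (S k) (fun j => cc j * ww (upd h k (mkI n a b 1) j) (fun x => pp (mkI n a b 1) (f n x))).
Proof.
  assert (Ey : forall z, yfin (upd h k (mkI n a b s)) (S k) z = yfin h k z + (s * cc k) * pp (mkI n a b 1) z).
  { intros z. unfold yfin. rewrite fsum_S. unfold upd. rewrite Nat.eqb_refl.
    rewrite (fsum_ext k _ (fun l => cc l * (i_s (h l) * pp (h l) z))).
    - unfold pp; simpl; ring.
    - intros j Hj. replace (Nat.eqb j k) with false; auto. symmetry; apply Nat.eqb_neq; lia. }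
  unfold Ffin. rewrite <- fsum_scal, <- fsum_plus. apply fsum_ext. intros j Hj.
  replace (fun x => yfin (upd h k (mkI n a b s)) (S k) (f n x)) with
    (fun x => yfin h k (f n x) + (s * cc k) * pp (mkI n a b 1) (f n x))
    by (apply functional_extensionality; intros; rewrite Ey; reflexivity).
  assert (Ew : forall chi, ww (upd h k (mkI n a b s) j) chi = ww (upd h k (mkI n a b 1) j) chi)
    by (intros; unfold ww, upd; destruct (Nat.eqb j k); reflexivity).
  rewrite Ew, ww_lin. ring.
Qed.

Section Contra.
Variable (U : forall L, exists n, ~ lipschitz_with d rho L (f n)).

Lemma good_ex h k : exists it, Good h k it.
Proof.
  destruct (sum_bound_ex h k) as [G HG].
  set (Lam := Rmax 1 ((INR k + cc k * G) * 2 / (cc k * cc k))).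
  destruct (choose_big U Lam) as [n [a [b [Hd [HR Hlip]]]]].
  set (R0 := ratio n a b) in *.
  pose proof (cc_pos k) as [Hc1 Hc2].
  assert (HR1 : 1 <= R0) by (eapply Rle_trans; [apply Rmax_l|exact HR]).
  assert (HR2 : (INR k + cc k * G) * 2 / (cc k * cc k) <= R0) by (eapply Rle_trans; [apply Rmax_r|exact HR]).
  apply div_le_inv in HR2; [|apply Rmult_lt_0_compat; lra].
  set (A := fsum (S k) (fun j => cc j * ww (upd h k (mkI n a b 1) j) (fun x => yfin h k (f n x)))).
  set (P := fun x => pp (mkI n a b 1) (f n x)).
  set (Q := fsum (S k) (fun j => cc j * ww (upd h k (mkI n a b 1) j) P)).
  set (F1 := fsum k (fun j => cc j * ww (h j) P)).
  assert (EQ : Q = F1 + cc k * R0).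
  { unfold Q, F1. rewrite fsum_S. unfold upd. rewrite Nat.eqb_refl.
    rewrite (fsum_ext k _ (fun j => cc j * ww (h j) P)).
    - f_equal. f_equal. unfold ww, P, pp, R0, ratio; simpl. rewrite (d_refl _ _ hN).
      unfold Rdiv; ring.
    - intros j Hj. replace (Nat.eqb j k) with false; auto. symmetry; apply Nat.eqb_neq; lia. }
  assert (HF1 : Rabs F1 <= G).
  { eapply Rle_trans; [apply fsum_abs|]. eapply Rle_trans; [|apply (HG n)].
    apply fsum_le. intros j Hj. pose proof (cc_pos j).
    rewrite Rabs_mult, (Rabs_right (cc j)) by lra. apply Rmult_le_compat_l; [lra|].
    apply ww_bound'. unfold P. eapply Rle_trans; [apply pp_lip'|].
    pose proof (d_tri _ _ hN (f n (i_a (h j))) y0 (f n (i_b (h j)))).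
    rewrite (d_sym _ _ hN y0) in H0. lra. }
  assert (HQ : cc k * R0 - G <= Rabs Q).
  { pose proof (Rle_abs (- F1)). rewrite Rabs_Ropp in H. pose proof (Rle_abs Q). lra. }
  assert (Hmax : exists s, (s = 1 \/ s = -1) /\ cc k * Rabs Q <= Rabs (A + s * cc k * Q)).
  { assert (H2 : 2 * (cc k * Rabs Q) <= Rabs (A + 1 * cc k * Q) + Rabs (A + -1 * cc k * Q)).
    { replace (2 * (cc k * Rabs Q)) with (Rabs ((A + 1 * cc k * Q) - (A + -1 * cc k * Q))).
      - unfold Rminus. eapply Rle_trans; [apply Rabs_triang|]. rewrite Rabs_Ropp. lra.
      - replace ((A + 1 * cc k * Q) - (A + -1 * cc k * Q)) with ((2 * cc k) * Q) by ring.
        rewrite Rabs_mult, Rabs_right by lra. ring. }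
    destruct (Rle_dec (Rabs (A + -1 * cc k * Q)) (Rabs (A + 1 * cc k * Q))).
    - exists 1. split; auto. lra.
    - exists (-1). split; auto. lra. }
  destruct Hmax as [s [Hs Hm]].
  exists (mkI n a b s). unfold Good; simpl. split; auto. split; auto. split; [exact Hlip|]. split; [unfold R0 in HR1; lra|]. fold R0.
  rewrite Ffin_split. fold A. fold P. fold Q.
  assert (cc k * (cc k * R0 - G) <= cc k * Rabs Q) by (apply Rmult_le_compat_l; lra).
  assert (cc k * (cc k * R0 - G) = cc k * cc k * R0 - cc k * G) by ring.
  lra.
Qed.


Definition nxt (h : nat -> item) (k : nat) : item :=
  proj1_sig (constructive_indefinite_description _ (good_ex h k)).
Lemma nxt_good h k : Good h k (nxt h k).
Proof. unfold nxt. destruct (constructive_indefinite_description _ _). auto. Qed.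
Fixpoint hist (k : nat) : nat -> item :=
  match k with O => fun _ => mkI O x0 x0 1 | S k => upd (hist k) k (nxt (hist k) k) end.
Definition sq k := nxt (hist k) k.
Lemma hist_sq k j : (j < k)%nat -> hist k j = sq j.
Proof.
  induction k; intros; [lia|]. simpl. unfold upd.
  destruct (Nat.eqb_spec j k); [subst; reflexivity| apply IHk; lia].
Qed.

Lemma sq_good k : d (i_a (sq k)) (i_b (sq k)) > 0 /\ (i_s (sq k) = 1 \/ i_s (sq k) = -1) /\
  lipschitz_with d rho (2 * ratio (i_n (sq k)) (i_a (sq k)) (i_b (sq k))) (f (i_n (sq k))) /\
  0 < ratio (i_n (sq k)) (i_a (sq k)) (i_b (sq k)) /\
  cc k * cc k * ratio (i_n (sq k)) (i_a (sq k)) (i_b (sq k)) / 2 + INR k <= Rabs (Ffin sq (S k) (i_n (sq k))).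
Proof.
  pose proof (nxt_good (hist k) k) as [H1 [H2 [H3 [H4 H5]]]]. fold (sq k) in *.
  repeat split; auto.
  rewrite (Ffin_ext _ sq) in H5; auto.
  intros j Hj. unfold upd. destruct (Nat.eqb_spec j k); [subst; reflexivity| apply hist_sq; lia].
Qed.

Lemma sq_d j : d (i_a (sq j)) (i_b (sq j)) > 0.
Proof. apply sq_good. Qed.
Lemma sq_s j : Rabs (i_s (sq j)) = 1.
Proof. destruct (sq_good j) as [_ [[H|H] _]]; rewrite H; unfold Rabs; destruct (Rcase_abs _); lra. Qed.

Definition muS (chi : M -> R) := Series (fun j => cc j * ww (sq j) chi).
Definition phiS (z : N) := Series (fun l => cc l * (i_s (sq l) * pp (sq l) z)).

Lemma term_bd l z z' : Rabs (i_s (sq l) * (pp (sq l) z - pp (sq l) z')) <= rho z z'.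
Proof. rewrite Rabs_mult, sq_s, Rmult_1_l. apply pp_lip'. Qed.

Lemma term_bd0 l z : Rabs (i_s (sq l) * pp (sq l) z) <= rho z y0.
Proof. replace (pp (sq l) z) with (pp (sq l) z - pp (sq l) y0) by (rewrite pp_y0; ring). apply term_bd. Qed.

Lemma phi_diff z z' m : exists t,
  phiS z - phiS z' = fsum m (fun l => cc l * (i_s (sq l) * (pp (sq l) z - pp (sq l) z'))) + t /\
  Rabs t <= 2 * cc m * rho z z'.
Proof.
  destruct (wser _ _ O (fun l => term_bd0 l z)) as [E1 _].
  destruct (wser _ _ O (fun l => term_bd0 l z')) as [E2 _].
  destruct (wser _ _ m (fun l => term_bd l z z')) as [_ [D B]].
  eexists. split; [|exact B]. rewrite <- D. unfold phiS. rewrite <- Series_minus by auto.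
  apply Series_ext. intros; ring.
Qed.

Lemma phi_lip : lipschitz_with rho R_dist 1 phiS.
Proof.
  intros z z'. destruct (phi_diff z z' O) as [t [E B]]. unfold R_dist. rewrite E. simpl.
  rewrite Rplus_0_l. simpl in B. lra.
Qed.

Lemma phi_y0 : phiS y0 = 0.
Proof.
  unfold phiS. rewrite (Series_ext _ (fun l => 0 * cc l)).
  - rewrite Series_scal_l. ring.
  - intros l. rewrite pp_y0. ring.
Qed.

Lemma phi_lip0 : lip0 rho y0 phiS.
Proof. split; [exists 1; apply phi_lip| apply phi_y0]. Qed.

Lemma ww_sq_lip j chi L : lipschitz_with d R_dist L chi -> Rabs (ww (sq j) chi) <= L.
Proof. intros H. apply ww_bound; [apply sq_d| apply H]. Qed.

Lemma mu_dec chi L m : lipschitz_with d R_dist L chi -> exists t,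
  muS chi = fsum m (fun j => cc j * ww (sq j) chi) + t /\ Rabs t <= 2 * cc m * L.
Proof.
  intros H. destruct (wser _ _ m (fun j => ww_sq_lip j chi L H)) as [_ [D B]].
  eexists; split; [exact D| exact B].
Qed.

Fixpoint lst (m : nat) : list (R * M) :=
  match m with O => nil
  | S m => (cc m / d (i_a (sq m)) (i_b (sq m)), i_a (sq m)) ::
           (- (cc m / d (i_a (sq m)) (i_b (sq m))), i_b (sq m)) :: lst m end.

Lemma mol_lst m chi : mol (lst m) chi = fsum m (fun j => cc j * ww (sq j) chi).
Proof.
  induction m; [reflexivity|]. rewrite fsum_S, <- IHm.
  change (mol (lst (S m)) chi) with
    (cc m / d (i_a (sq m)) (i_b (sq m)) * chi (i_a (sq m)) +
     (- (cc m / d (i_a (sq m)) (i_b (sq m))) * chi (i_b (sq m)) + mol (lst m) chi)).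
  unfold ww, Rdiv. ring.
Qed.

Lemma cc_small e : e > 0 -> exists m, 2 * cc m <= e.
Proof.
  intros He. destruct (pow_lt_1_zero (/2) ltac:(rewrite Rabs_right; lra) e He) as [K HK].
  exists K. specialize (HK K (le_n _)). rewrite Rabs_right in HK by (apply Rle_ge, pow_le; lra).
  pose proof (cc_geom O K). simpl in H. lra.
Qed.

Lemma mu_free : in_free d x0 muS.
Proof.
  split; [split|].
  - intros a b p q [[Lp Hp] _] [[Lq Hq] _].
    destruct (wser _ _ O (fun j => ww_sq_lip j p Lp Hp)) as [Ep _].
    destruct (wser _ _ O (fun j => ww_sq_lip j q Lq Hq)) as [Eq _].
    unfold muS.
    rewrite (Series_ext _ (fun j => a * (cc j * ww (sq j) p) + b * (cc j * ww (sq j) q))).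
    + rewrite Series_plus, !Series_scal_l; auto.
      * apply (ex_series_ext (fun j => scal a (cc j * ww (sq j) p))); [intros; reflexivity|].
        apply (@ex_series_scal_l R_AbsRing R_NormedModule); auto.
      * apply (ex_series_ext (fun j => scal b (cc j * ww (sq j) q))); [intros; reflexivity|].
        apply (@ex_series_scal_l R_AbsRing R_NormedModule); auto.
    + intros j. rewrite (ww_lin _ (fun x => a * p x) b q).
      replace (ww (sq j) (fun x => a * p x)) with (a * ww (sq j) p) by (unfold ww, Rdiv; ring). ring.
  - exists 1. intros p Hp H1. destruct (mu_dec p 1 O H1) as [t [E B]]. rewrite E. simpl.
    simpl in B. rewrite Rplus_0_l. lra.
  - intros e He. destruct (cc_small e He) as [m Hm]. exists (lst m).
    intros p Hp H1. destruct (mu_dec p 1 m H1) as [t [E B]]. rewrite E, mol_lst.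
    replace (fsum m (fun j => cc j * ww (sq j) p) + t - fsum m (fun j => cc j * ww (sq j) p)) with t by ring.
    lra.
Qed.

Lemma key k : INR k <= Rabs (muS (fun x => phiS (f (i_n (sq k)) x))).
Proof.
  destruct (sq_good k) as [Hd [Hs [Hlip [HR Hineq]]]].
  set (n := i_n (sq k)) in *.
  set (R0 := ratio n (i_a (sq k)) (i_b (sq k))) in *.
  set (chi := fun x => phiS (f n x)).
  assert (Hchi : lipschitz_with d R_dist (1 * (2 * R0)) chi)
    by (apply (comp_lip M N d rho (f n) phiS 1 (2 * R0)); [apply phi_lip| exact Hlip| lra]).
  destruct (mu_dec chi _ (S k) Hchi) as [t1 [E1 B1]].
  set (Y := fun x => yfin sq (S k) (f n x)).
  assert (Hj : forall j, Rabs (ww (sq j) chi - ww (sq j) Y) <= 2 * cc (S k) * (2 * R0)).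
  { intros j. pose proof (sq_d j) as Hdj.
    destruct (phi_diff (f n (i_a (sq j))) (f n (i_b (sq j))) (S k)) as [t [Et Bt]].
    assert (EY : Y (i_a (sq j)) - Y (i_b (sq j)) = fsum (S k) (fun l => cc l * (i_s (sq l) *
       (pp (sq l) (f n (i_a (sq j))) - pp (sq l) (f n (i_b (sq j))))))).
    { unfold Y, yfin. rewrite <- fsum_minus. apply fsum_ext; intros; ring. }
    replace (ww (sq j) chi - ww (sq j) Y) with
      (((chi (i_a (sq j)) - chi (i_b (sq j))) - (Y (i_a (sq j)) - Y (i_b (sq j)))) / d (i_a (sq j)) (i_b (sq j)))
      by (unfold ww, Rdiv; ring).
    replace ((chi (i_a (sq j)) - chi (i_b (sq j))) - (Y (i_a (sq j)) - Y (i_b (sq j)))) with t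
      by (unfold chi; rewrite EY; lra).
    rewrite Rabs_div_pos by exact Hdj. apply div_le; auto.
    pose proof (Hlip (i_a (sq j)) (i_b (sq j))). pose proof (cc_pos (S k)).
    assert (2 * cc (S k) * rho (f n (i_a (sq j))) (f n (i_b (sq j))) <=
            2 * cc (S k) * (2 * R0 * d (i_a (sq j)) (i_b (sq j)))) by (apply Rmult_le_compat_l; lra).
    lra. }
  assert (Hsum : Rabs (fsum (S k) (fun j => cc j * ww (sq j) chi) - Ffin sq (S k) n) <= 2 * cc (S k) * (2 * R0)).
  { unfold Ffin. fold Y. rewrite <- fsum_minus. eapply Rle_trans; [apply fsum_abs|].
    eapply Rle_trans; [apply fsum_le with (v := fun j => (2 * cc (S k) * (2 * R0)) * cc j)|].
    - intros j _. pose proof (cc_pos j).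
      replace (cc j * ww (sq j) chi - cc j * ww (sq j) Y) with (cc j * (ww (sq j) chi - ww (sq j) Y)) by ring.
      rewrite Rabs_mult, (Rabs_right (cc j)) by lra. rewrite Rmult_comm.
      apply Rmult_le_compat_r; [lra| apply Hj].
    - rewrite fsum_scal. pose proof (fsum_cc (S k)). pose proof (cc_pos (S k)) as [h1 _].
      assert (0 <= 2 * cc (S k) * (2 * R0)) by (apply Rmult_le_pos; lra).
      assert (fsum (S k) cc <= 1) by lra.
      pose proof (Rmult_le_compat_l _ _ _ H0 H1). lra. }
  assert (Ec : cc (S k) * R0 = cc k * cc k * R0 / 16) by (simpl; field).
  fold chi. rewrite E1.
  assert (Rabs (Ffin sq (S k) n) <= Rabs (fsum (S k) (fun j => cc j * ww (sq j) chi) + t1) +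
     Rabs (fsum (S k) (fun j => cc j * ww (sq j) chi) - Ffin sq (S k) n) + Rabs t1).
  { replace (Ffin sq (S k) n) with ((fsum (S k) (fun j => cc j * ww (sq j) chi) + t1) -
      (fsum (S k) (fun j => cc j * ww (sq j) chi) - Ffin sq (S k) n) - t1) at 1 by ring.
    unfold Rminus. eapply Rle_trans; [apply Rabs_triang|]. rewrite Rabs_Ropp.
    eapply Rplus_le_compat_r. eapply Rle_trans; [apply Rabs_triang|]. rewrite Rabs_Ropp. lra. }
  lra.
Qed.

Lemma contra : False.
Proof.
  pose proof (hwot muS mu_free _ (lip_free_dual _ _ _ hN _ phi_lip0)) as H.
  destruct (cv_bounded _ _ H) as [B HB].
  destruct (nat_above B) as [k Hk].
  specialize (HB (i_n (sq k))). simpl in HB.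
  rewrite (T_formula M N d rho x0 y0 hM hN _ _ (hf _) (hTf _) muS phiS mu_free phi_lip0) in HB.
  pose proof (key k). lra.
Qed.

End Contra.

Lemma unif : exists L, forall n, lipschitz_with d rho L (f n).
Proof.
  apply NNPP. intro H. apply contra.
  intros L. apply not_all_ex_not. intro H'. apply H. exists L. exact H'.
Qed.

Definition errl (l : list (R * M)) n :=
  fold_right (fun p acc => Rabs (fst p) * rho (f n (snd p)) (g (snd p)) + acc) 0 l.

Lemma errl_small l e : e > 0 -> exists K, forall n, (n >= K)%nat -> errl l n <= e.
Proof.
  revert e. induction l as [|p l IH]; intros e He.
  - exists O. intros. simpl. lra.
  - destruct (IH (e/2) ltac:(lra)) as [K1 HK1].
    assert (Hq : e / (2 * (Rabs (fst p) + 1)) > 0)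
      by (apply Rdiv_lt_0_compat; [lra| pose proof (Rabs_pos (fst p)); lra]).
    destruct (pw_conv (snd p) _ Hq) as [K2 HK2].
    exists (max K1 K2). intros n Hn. simpl.
    specialize (HK1 n ltac:(lia)). specialize (HK2 n ltac:(lia)).
    unfold R_dist in HK2. rewrite Rminus_0_r in HK2.
    pose proof (Rle_abs (rho (f n (snd p)) (g (snd p)))).
    pose proof (Rabs_pos (fst p)).
    assert (Rabs (fst p) * rho (f n (snd p)) (g (snd p)) <= Rabs (fst p) * (e / (2 * (Rabs (fst p) + 1))))
      by (apply Rmult_le_compat_l; lra).
    assert (Rabs (fst p) * (e / (2 * (Rabs (fst p) + 1))) <= e / 2).
    { assert ((Rabs (fst p) + 1) * (e / (2 * (Rabs (fst p) + 1))) = e / 2) by (field; lra).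
      assert (Rabs (fst p) * (e / (2 * (Rabs (fst p) + 1))) <= (Rabs (fst p) + 1) * (e / (2 * (Rabs (fst p) + 1))))
        by (apply Rmult_le_compat_r; lra). lra. }
    lra.
Qed.

Lemma mol_diff l (chi1 chi2 : M -> R) (w : M -> R) : (forall x, Rabs (chi1 x - chi2 x) <= w x) ->
  Rabs (mol l chi1 - mol l chi2) <= fold_right (fun p acc => Rabs (fst p) * w (snd p) + acc) 0 l.
Proof.
  intros H. induction l as [|p l IH].
  - unfold mol; simpl. replace (0 - 0) with 0 by ring. rewrite Rabs_R0. lra.
  - change (mol (p :: l) chi1) with (fst p * chi1 (snd p) + mol l chi1).
    change (mol (p :: l) chi2) with (fst p * chi2 (snd p) + mol l chi2). simpl.
    replace (fst p * chi1 (snd p) + mol l chi1 - (fst p * chi2 (snd p) + mol l chi2))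
      with (fst p * (chi1 (snd p) - chi2 (snd p)) + (mol l chi1 - mol l chi2)) by ring.
    eapply Rle_trans; [apply Rabs_triang|]. rewrite Rabs_mult.
    assert (Rabs (fst p) * Rabs (chi1 (snd p) - chi2 (snd p)) <= Rabs (fst p) * w (snd p))
      by (apply Rmult_le_compat_l; [apply Rabs_pos| apply H]).
    lra.
Qed.

Lemma sot : sot_conv d x0 rho y0 Tf Tg.
Proof.
  destruct unif as [L HL].
  intros mu Hmu e He.
  set (L' := Rabs L + 1). set (Lg := Rabs (proj1_sig (constructive_indefinite_description _ (proj1 hg))) + 1).
  assert (HL' : forall n, lipschitz_with d rho L' (f n)) by (intros; apply (lip_pos _ _ hM); auto).
  assert (HLg : lipschitz_with d rho Lg g).
  { unfold Lg. destruct (constructive_indefinite_description _ _) as [Lg0 H0]. simpl. apply (lip_pos _ _ hM); auto. }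
  assert (P1 : L' > 0) by (unfold L'; pose proof (Rabs_pos L); lra).
  assert (P2 : Lg > 0) by (unfold Lg; pose proof (Rabs_pos (proj1_sig (constructive_indefinite_description _ (proj1 hg)))); lra).
  set (eps := e / (2 * (L' + Lg))).
  assert (Heps : eps > 0) by (unfold eps; apply Rdiv_lt_0_compat; lra).
  pose proof Hmu as [Hmd Hma]. destruct (Hma eps Heps) as [l Hl].
  destruct (errl_small l (e/2) ltac:(lra)) as [K HK].
  exists K. intros n Hn phi Hp Hp1.
  rewrite (T_formula M N d rho x0 y0 hM hN _ _ (hf n) (hTf n)) by auto.
  rewrite (T_formula M N d rho x0 y0 hM hN _ _ hg hTg) by auto.
  set (nu := fun chi => mu chi - mol l chi) in *.
  assert (Hnu : in_free d x0 nu) by (apply in_free_diff; auto; apply mol_in_free).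
  assert (B1 : Rabs (nu (fun x => phi (f n x))) <= eps * (1 * L')).
  { apply (dual_bound _ d x0); [apply Hnu| exact Hl| apply (comp_lip0 M N d rho x0 y0 hM hN); auto|
      apply (comp_lip M N d rho (f n) phi 1 L'); auto; lra| lra]. }
  assert (B2 : Rabs (nu (fun x => phi (g x))) <= eps * (1 * Lg)).
  { apply (dual_bound _ d x0); [apply Hnu| exact Hl| apply (comp_lip0 M N d rho x0 y0 hM hN); auto|
      apply (comp_lip M N d rho g phi 1 Lg); auto; lra| lra]. }
  assert (B3 : Rabs (mol l (fun x => phi (f n x)) - mol l (fun x => phi (g x))) <= e / 2).
  { eapply Rle_trans; [apply (mol_diff l _ _ (fun x => rho (f n x) (g x)))|].
    - intros x. pose proof (Hp1 (f n x) (g x)). unfold R_dist in H. lra.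
    - apply HK. lia. }
  assert (eps * (L' + Lg) = e / 2) by (unfold eps; field; lra).
  replace (mu (fun x => phi (f n x)) - mu (fun x => phi (g x))) with
    (nu (fun x => phi (f n x)) - nu (fun x => phi (g x)) +
     (mol l (fun x => phi (f n x)) - mol l (fun x => phi (g x)))) by (unfold nu; ring).
  eapply Rle_trans; [apply Rabs_triang|]. unfold Rminus at 1.
  pose proof (Rabs_triang (nu (fun x => phi (f n x))) (- nu (fun x => phi (g x)))).
  rewrite Rabs_Ropp in H0. lra.
Qed.

End Main.

Theorem proposition6p1 (M N : Type) (d : M -> M -> R) (rho : N -> N -> R) (x0 : M) (y0 : N)
  (hM : is_metric d) (hMc : complete d) (hN : is_metric rho) (hNc : complete rho)
  (f : nat -> M -> N) (g : M -> N)
  (hf : forall n, lip0map d x0 rho y0 (f n)) (hg : lip0map d x0 rho y0 g)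
  (Tf : nat -> functional M -> functional N) (Tg : functional M -> functional N)
  (hTf : forall n, is_linearization d x0 rho y0 (f n) (Tf n))
  (hTg : is_linearization d x0 rho y0 g Tg)
  (hwot : wot_conv d x0 rho y0 Tf Tg) :
  sot_conv d x0 rho y0 Tf Tg.
Proof. exact (sot M N d rho x0 y0 hM hN f g hf hg Tf Tg hTf hTg hwot). Qed.
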